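(* For every $n\ge 3$ and every $\eta>0$ there exist a $1$-dimensional Euclidean graph $G$ on $n$ vertices and a range assignment $r$ such that $SDG(G,r)$ is connected and the weight-coefficient of $SDG(G,r)$ with respect to $G$ is at least $n-2-\eta$. Concretely, take points $s,u_1,\dots,u_{n-2},t$ on the real line at coordinates $0,1,1+\epsilon,\dots,1+(n-3)\epsilon, W+1$, let $G$ have edge set $\{(s,u_i)\}\cup\{(u_i,t)\}$ for $i\in[n-2]$ with Euclidean edge weights, and let $r(s)=1$, $r(x)=W$ for all other vertices $x$; for $W$ sufficiently large relative to $n$ and $\epsilon$ sufficiently small relative to $1/n$, this works. Thus the weight-coefficient of connected SDGs of $1$-dimensional Euclidean $n$-vertex graphs can be $\Omega(n)$.
   Context: A $1$-dimensional Euclidean graph is a weighted graph whose vertices are points on a line and whose edges (not necessarily all pairs) have weight equal to the Euclidean distance between their endpoints. For a weighted graph $G=(V,E,w)$ and $r:V\to\mathbb{R}^+$, $SDG(G,r)$ is the spanning subgraph of $G$ containing edge $e=(u,v)\in E$ iff $r(u)\ge w(e)$ and $r(v)\ge w(e)$. The weight-coefficient of a connected spanning subgraph $G'$ of $G$ with respect to $G$ is $w(MST(G'))/w(MST(G))$. *)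

(* Defs.v *)
From HB Require Import structures.
From mathcomp Require Import all_boot all_order all_algebra.
Set Implicit Arguments. Unset Strict Implicit. Unset Printing Implicit Defensive.
Import Order.TTheory GRing.Theory Num.Theory.
Local Open Scope ring_scope.

Definition ewt (R : realFieldType) (n : nat) (p : 'I_n -> R) (u v : 'I_n) : R :=
  `|p u - p v|.

Definition simple_graph (n : nat) (E : rel 'I_n) : Prop :=
  (forall u v, E u v = E v u) /\ (forall u, ~~ E u u).

Definition euclid1_graph (R : realFieldType) (n : nat)
  (p : 'I_n -> R) (E : rel 'I_n) : Prop :=
  injective p /\ simple_graph E.

Definition connected_graph (n : nat) (E : rel 'I_n) : Prop :=
  forall u v, connect E u v.

Definition sdg (R : realFieldType) (n : nat) (p : 'I_n -> R) (E : rel 'I_n)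
  (r : 'I_n -> R) : rel 'I_n :=
  fun u v => [&& E u v, ewt p u v <= r u & ewt p u v <= r v].

(* A spanning tree of the graph (vertices 'I_n, edges E): a set T of edges
   (each stored once as (i,j) with i < j), all belonging to E, connecting all
   vertices, with exactly n - 1 edges. *)
Definition tree_rel (n : nat) (T : {set 'I_n * 'I_n}) : rel 'I_n :=
  fun a b => ((a, b) \in T) || ((b, a) \in T).

Definition spanning_tree (n : nat) (E : rel 'I_n) (T : {set 'I_n * 'I_n}) : Prop :=
  (forall e, e \in T -> ((e.1 < e.2)%N && E e.1 e.2)) /\
  connected_graph (tree_rel T) /\
  #|T| = n.-1.

Definition tree_weight (R : realFieldType) (n : nat) (p : 'I_n -> R)
  (T : {set 'I_n * 'I_n}) : R :=
  \sum_(e in T) ewt p e.1 e.2.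

Definition mst_weight (R : realFieldType) (n : nat) (p : 'I_n -> R)
  (E : rel 'I_n) (m : R) : Prop :=
  (exists T, spanning_tree E T /\ tree_weight p T = m) /\
  (forall T, spanning_tree E T -> m <= tree_weight p T).

(* Main.v *)
Require Import Defs.
From HB Require Import structures.
From mathcomp Require Import all_boot all_order all_algebra.
Set Implicit Arguments. Unset Strict Implicit. Unset Printing Implicit Defensive.
Import Order.TTheory GRing.Theory Num.Theory.
Local Open Scope ring_scope.

Definition sV k : 'I_k.+3 := ord0.
Definition tV k : 'I_k.+3 := ord_max.
Definition uV k (i : 'I_k.+3) : bool := (i != sV k) && (i != tV k).

Lemma st_neq k : (sV k == tV k) = false.
Proof. by []. Qed.

Lemma uVs k : uV (sV k) = false.
Proof. by rewrite /uV eqxx. Qed.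
Lemma uVt k : uV (tV k) = false.
Proof. by rewrite /uV eqxx andbF. Qed.

Lemma decomp (R : realFieldType) k (T : {set 'I_k.+3 * 'I_k.+3}) (F : 'I_k.+3 * 'I_k.+3 -> R) :
  (forall e, e \in T -> ((e.1 == sV k) && uV e.2) || ((e.2 == tV k) && uV e.1)) ->
  \sum_(e in T) F e = \sum_i ((if (sV k, i) \in T then F (sV k, i) else 0)
                             + (if (i, tV k) \in T then F (i, tV k) else 0)).
Proof.
move=> HT.
have Hst : (sV k, tV k) \in T = false.
  by apply/negP => /HT /=; rewrite uVs uVt !andbF.
rewrite big_mkcond /=.
rewrite (eq_bigr (fun e => if (e.1, e.2) \in T then F (e.1, e.2) else 0)); last by case.
rewrite -(pair_bigA _ (fun a b => if (a, b) \in T then F (a, b) else 0)) /=.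
rewrite (eq_bigr (fun a => (if a == sV k then \sum_b (if (sV k, b) \in T then F (sV k, b) else 0) else 0)
     + (if (a, tV k) \in T then F (a, tV k) else 0))).
  rewrite big_split /= -big_mkcond big_pred1_eq.
  by rewrite [in RHS]big_split.
move=> a _.
case: eqP => [->|Has].
  by rewrite Hst addr0.
rewrite add0r (bigD1 (tV k)) //= big1 ?addr0 // => b Hb.
case: ifP => // /HT /=; move/eqP: Has => /negbTE -> /=.
by rewrite (negbTE Hb).
Qed.

Lemma shift_le (R : realFieldType) (I : finType) (v v0 w w0 : I -> R) (K : R) :
  \sum_i w i = \sum_i w0 i -> (forall i, v0 i - K * w0 i <= v i - K * w i) ->
  \sum_i v0 i <= \sum_i v i.
Proof.
move=> Hw Hi.
have : \sum_i (v0 i - K * w0 i) <= \sum_i (v i - K * w i) by apply: ler_sum => i _; exact: Hi.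
rewrite !sumrB -!mulr_sumr Hw.
by rewrite lerD2r.
Qed.

Lemma vw (R : realFieldType) (x y : bool) (a b K : R) :
  ((if x then a else 0) + (if y then b else 0)) - K * ((if x then 1 else 0) + (if y then 1 else 0))
  = (if x then a - K else 0) + (if y then b - K else 0).
Proof.
case: x; case: y; rewrite ?mulr0 ?subr0 ?addr0 ?add0r ?mulr1 //.
  by rewrite mulrDr mulr1 opprD addrACA.
by rewrite mulr0 oppr0.
Qed.

Lemma per_m (R : realFieldType) (x y y0 : bool) (a b c : R) :
  a <= c -> c <= b -> (y0 -> b = c) ->
  (a - c) + (if y0 then b - c else 0) <=
  (if x then a - c else 0) + (if y then b - c else 0).
Proof.
move=> Hac Hcb Hy.
have -> : (if y0 then b - c else 0) = 0 by case: y0 Hy => // /(_ isT) ->; rewrite subrr.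
rewrite addr0.
have H1 : a - c <= (if x then a - c else 0) by case: x; rewrite // subr_le0.
have H2 : 0 <= (if y then b - c else 0) by case: y; rewrite // subr_ge0.
by apply: le_trans (lerD H1 H2); rewrite addr0.
Qed.

Lemma per_m' (R : realFieldType) (x y x0 y0 : bool) (a b c : R) :
  a <= c -> b <= c -> (x -> x0) -> (y -> y0) ->
  (if x0 then a - c else 0) + (if y0 then b - c else 0) <=
  (if x then a - c else 0) + (if y then b - c else 0).
Proof.
move=> Ha Hb Hx Hy; apply: lerD.
  by case: x0 Hx; case: x => //= H; [rewrite subr_le0 | move: (H isT)].
by case: y0 Hy; case: y => //= H; [rewrite subr_le0 | move: (H isT)].
Qed.

Definition e0 k (a b : 'I_k.+3) : bool := ((a == sV k) && uV b) || ((a == tV k) && uV b).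
Definition Eg k : rel 'I_k.+3 := fun a b => e0 a b || e0 b a.
Definition pp (R : realFieldType) k (P : R) (i : 'I_k.+3) : R :=
  if i == tV k then P else (i : nat)%:R.
Definition rr (R : realFieldType) k (P : R) (i : 'I_k.+3) : R :=
  if i == sV k then 1 else P.
Definition u1 k : 'I_k.+3 := inord 1.
Definition ul k : 'I_k.+3 := inord k.+1.
Definition T0 k : {set 'I_k.+3 * 'I_k.+3} :=
  [set e | ((e.1 == sV k) && uV e.2) || ((e.1 == ul k) && (e.2 == tV k))].
Definition S0 k : {set 'I_k.+3 * 'I_k.+3} :=
  [set e | (e == (sV k, u1 k)) || ((e.2 == tV k) && uV e.1)].

Lemma u1_val k : (u1 k : nat) = 1%N.
Proof. by rewrite /u1 inordK. Qed.
Lemma ul_val k : (ul k : nat) = k.+1.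
Proof. by rewrite /ul inordK. Qed.

Lemma uV_val k (i : 'I_k.+3) : uV i = (0 < i)%N && (i <= k.+1)%N.
Proof.
rewrite /uV /sV /tV.
have Hi := ltn_ord i.
have -> : (i != ord0) = (0 < i)%N by rewrite lt0n.
have -> : (i != ord_max) = (i != k.+2 :> nat) by [].
congr (_ && _).
have -> : (i <= k.+1)%N = (i < k.+2)%N by [].
by rewrite ltn_neqAle -ltnS Hi andbT.
Qed.

Lemma uV_u1 k : uV (u1 k). Proof. by rewrite uV_val u1_val. Qed.
Lemma uV_ul k : uV (ul k). Proof. by rewrite uV_val ul_val /=. Qed.

Lemma card_uV k : #|[pred i : 'I_k.+3 | uV i]| = k.+1.
Proof.
have := cardC [pred i : 'I_k.+3 | uV i].
rewrite card_ord.
rewrite (@eq_card _ [predC [pred i : 'I_k.+3 | uV i]] (pred2 (sV k) (tV k))); last first.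
  by move=> i; rewrite !inE /uV negb_and !negbK.
by rewrite card2 st_neq /= addn2 => -[].
Qed.

Lemma sum_uV (R : realFieldType) k (c : R) :
  \sum_(i : 'I_k.+3) (if uV i then c else 0) = c *+ k.+1.
Proof.
rewrite -big_mkcond /=.
rewrite -[in RHS](card_uV k) -sumr_const.
by apply: eq_bigl => i; rewrite inE.
Qed.

Lemma edge_form k (e : 'I_k.+3 * 'I_k.+3) :
  ((e.1 < e.2)%N && Eg e.1 e.2) ->
  ((e.1 == sV k) && uV e.2) || ((e.2 == tV k) && uV e.1).
Proof.
case: e => a b /= /andP [Hab].
have Hb := ltn_ord b.
rewrite /Eg /e0.
case/orP => /orP [] /andP [/eqP Ha Hu].
- by rewrite Ha eqxx Hu.
- by exfalso; move: Hab; rewrite Ha /= ltnNge -ltnS Hb.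
- by exfalso; move: Hab; rewrite Ha.
- by rewrite Ha eqxx Hu orbT.
Qed.


Lemma cover k (v : 'I_k.+3) : (v == sV k) || (v == tV k) || uV v.
Proof. by rewrite /uV; case: (v == sV k); case: (v == tV k). Qed.

Lemma conn_all k (e : rel 'I_k.+3) : symmetric e ->
  (forall v, connect e v (tV k)) -> connected_graph e.
Proof.
move=> Hs Hc u v; apply: connect_trans (Hc u) _.
by rewrite (sym_connect_sym Hs); apply: Hc.
Qed.

Lemma Eg_sym k : symmetric (@Eg k).
Proof. by move=> a b; rewrite /Eg orbC. Qed.

Lemma Eg_irr k (a : 'I_k.+3) : ~~ Eg a a.
Proof.
rewrite /Eg /e0 /uV orbb; case: (a == sV k); case: (a == tV k) => //.
Qed.

Lemma tree_rel_sym n (T : {set 'I_n * 'I_n}) : symmetric (tree_rel T).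
Proof. by move=> a b; rewrite /tree_rel orbC. Qed.


Lemma pp_s (R : realFieldType) k (P : R) : pp P (sV k) = 0.
Proof. by rewrite /pp st_neq. Qed.
Lemma pp_t (R : realFieldType) k (P : R) : pp P (tV k) = P.
Proof. by rewrite /pp eqxx. Qed.
Lemma pp_u (R : realFieldType) k (P : R) (i : 'I_k.+3) : uV i -> pp P i = (i : nat)%:R.
Proof. by rewrite /pp /uV => /andP [_ /negbTE ->]. Qed.

Lemma pp_bnd (R : realFieldType) k (P : R) (i : 'I_k.+3) :
  (k.+1 + k.+1)%:R < P -> 0 <= pp P i <= P.
Proof.
move=> HP.
have P0 : 0 <= P by apply: le_trans (ltW HP).
rewrite /pp; case: eqP => _; first by rewrite P0 lexx.
rewrite ler0n /=; apply: le_trans (ltW HP).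
rewrite ler_nat; have := ltn_ord i; rewrite ltnS => H; apply: leq_trans H _.
by rewrite addSn ltnS addnS ltnS leq_addl.
Qed.

Lemma ewt_s (R : realFieldType) k (P : R) (i : 'I_k.+3) :
  (k.+1 + k.+1)%:R < P -> ewt (pp P) (sV k) i = pp P i.
Proof.
move=> HP; rewrite /ewt pp_s sub0r normrN ger0_norm //.
by case/andP: (pp_bnd i HP).
Qed.

Lemma ewt_t (R : realFieldType) k (P : R) (i : 'I_k.+3) :
  (k.+1 + k.+1)%:R < P -> ewt (pp P) i (tV k) = P - pp P i.
Proof.
move=> HP; rewrite /ewt pp_t distrC ger0_norm // subr_ge0.
by case/andP: (pp_bnd i HP).
Qed.

Lemma rr_ns (R : realFieldType) k (P : R) (i : 'I_k.+3) : i != sV k -> rr P i = P.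
Proof. by rewrite /rr => /negbTE ->. Qed.

Lemma sdg_ut (R : realFieldType) k (P : R) (i : 'I_k.+3) :
  (k.+1 + k.+1)%:R < P -> uV i -> sdg (pp P) (@Eg k) (rr P) i (tV k).
Proof.
move=> HP Hu; rewrite /sdg.
have Hi : i != sV k by case/andP: Hu.
have Hb := pp_bnd i HP; case/andP: Hb => Hb0 Hb1.
rewrite /Eg /e0 eqxx Hu !orbT /= ewt_t // rr_ns // rr_ns //.
by rewrite gerBl Hb0.
Qed.

Lemma sdg_su1 (R : realFieldType) k (P : R) :
  (k.+1 + k.+1)%:R < P -> sdg (pp P) (@Eg k) (rr P) (sV k) (u1 k).
Proof.
move=> HP; rewrite /sdg /Eg /e0 eqxx uV_u1 /= ewt_s // pp_u ?uV_u1 // u1_val.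
rewrite /rr eqxx lexx /=.
have -> : (u1 k == sV k) = false by apply/negbTE; case/andP: (uV_u1 k).
apply: le_trans (ltW HP); by rewrite ler_nat.
Qed.

Lemma sdg_s_inv (R : realFieldType) k (P : R) (i : 'I_k.+3) :
  (k.+1 + k.+1)%:R < P -> sdg (pp P) (@Eg k) (rr P) (sV k) i -> uV i -> i = u1 k.
Proof.
move=> HP /and3P [_ H _] Hu.
move: H; rewrite ewt_s // pp_u // /rr eqxx => H1.
have {}H1 : (i <= 1)%N by rewrite -(ler_nat R); exact: H1.
move: Hu; rewrite uV_val => /andP [H0 _].
apply: val_inj; rewrite /= u1_val; apply/eqP; rewrite eqn_leq H1 H0.
by [].
Qed.

Lemma sdg_sym (R : realFieldType) k (P : R) : symmetric (sdg (pp P) (@Eg k) (rr P)).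
Proof.
move=> a b; rewrite /sdg Eg_sym /ewt distrC.
by case: (Eg b a); case: (_ <= rr P a); case: (_ <= rr P b).
Qed.

Lemma ul_ns k : (ul k == sV k) = false.
Proof. by apply/negbTE; case/andP: (uV_ul k). Qed.
Lemma ul_nt k : (ul k == tV k) = false.
Proof. by apply/negbTE; case/andP: (uV_ul k). Qed.
Lemma u1_ns k : (u1 k == sV k) = false.
Proof. by apply/negbTE; case/andP: (uV_u1 k). Qed.
Lemma u1_nt k : (u1 k == tV k) = false.
Proof. by apply/negbTE; case/andP: (uV_u1 k). Qed.

Lemma T0_s k i : ((sV k, i) \in T0 k) = uV i.
Proof. by rewrite inE /= ?eqxx eq_sym ul_ns ?orbF. Qed.
Lemma T0_t k i : ((i, tV k) \in T0 k) = (i == ul k).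
Proof. by rewrite inE /= ?eqxx ?uVt ?andbF ?andbT. Qed.
Lemma S0_s k i : ((sV k, i) \in S0 k) = (i == u1 k).
Proof. by rewrite inE /= ?xpair_eqE ?eqxx ?uVs ?andbF ?andbT ?orbF. Qed.
Lemma S0_t k i : ((i, tV k) \in S0 k) = uV i.
Proof. by rewrite inE /= ?xpair_eqE [tV k == u1 k]eq_sym u1_nt andbF eqxx. Qed.

Lemma uV_lt k (i : 'I_k.+3) : uV i -> (0 < i)%N && (i < tV k)%N.
Proof. by rewrite uV_val. Qed.

Lemma T0_edge k e : e \in T0 k -> (e.1 < e.2)%N && Eg e.1 e.2.
Proof.
case: e => a b; rewrite inE /= => /orP [] /andP [/eqP -> H].
  by case/andP: (uV_lt H) => -> _ /=; rewrite /Eg /e0 eqxx H.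
move/eqP: H => ->; rewrite ul_val /= /Eg /e0 eqxx uV_ul !orbT.
by rewrite andbT.
Qed.

Lemma S0_edge (R : realFieldType) k (P : R) e :
  (k.+1 + k.+1)%:R < P -> e \in S0 k -> (e.1 < e.2)%N && sdg (pp P) (@Eg k) (rr P) e.1 e.2.
Proof.
move=> HP; case: e => a b; rewrite inE /= => /orP [].
  by move/eqP => [-> ->]; rewrite u1_val sdg_su1.
case/andP => /eqP -> H; rewrite sdg_ut // andbT.
by case/andP: (uV_lt H).
Qed.

Lemma form_of k (T : {set 'I_k.+3 * 'I_k.+3}) (e' : rel 'I_k.+3) :
  (forall a b, e' a b -> Eg a b) ->
  (forall e, e \in T -> ((e.1 < e.2)%N && e' e.1 e.2)) ->
  forall e, e \in T -> ((e.1 == sV k) && uV e.2) || ((e.2 == tV k) && uV e.1).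
Proof.
move=> Hs HT e /HT /andP [H1 H2]; apply: edge_form.
by rewrite H1 Hs.
Qed.

Lemma count_T k (R : realFieldType) (T : {set 'I_k.+3 * 'I_k.+3}) :
  (forall e, e \in T -> ((e.1 == sV k) && uV e.2) || ((e.2 == tV k) && uV e.1)) ->
  \sum_i ((if (sV k, i) \in T then 1 else 0) + (if (i, tV k) \in T then 1 else 0)) = (#|T|%:R : R).
Proof.
move=> H; rewrite -(decomp (fun _ => (1 : R)) H).
by rewrite sumr_const.
Qed.

Lemma T0_card k : #|T0 k| = k.+2.
Proof.
have Hf := form_of (fun a b (H : Eg a b) => H) (@T0_edge k).
apply/eqP; rewrite -(eqr_nat rat) -(@count_T k rat _ Hf).
rewrite (eq_bigr (fun i => (if uV i then 1 else 0) + (if i == ul k then 1 else 0))); last first.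
  by move=> i _; rewrite T0_s T0_t.
rewrite big_split /= sum_uV -big_mkcond big_pred1_eq.
by rewrite -[k.+2]addn1 natrD.
Qed.

Lemma S0_form k : forall e, e \in S0 k ->
  ((e.1 == sV k) && uV e.2) || ((e.2 == tV k) && uV e.1).
Proof.
case=> a b; rewrite inE /= => /orP [].
  by move/eqP => [-> ->]; rewrite ?eqxx uV_u1.
by move=> ->; rewrite orbT.
Qed.

Lemma S0_card k : #|S0 k| = k.+2.
Proof.
apply/eqP; rewrite -(eqr_nat rat) -(@count_T k rat _ (@S0_form k)).
rewrite (eq_bigr (fun i => (if i == u1 k then 1 else 0) + (if uV i then 1 else 0))); last first.
  by move=> i _; rewrite S0_s S0_t.
rewrite big_split /= sum_uV -big_mkcond big_pred1_eq.
by rewrite -[k.+2]add1n natrD.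
Qed.

Lemma form_s k (T : {set 'I_k.+3 * 'I_k.+3}) i :
  (forall e, e \in T -> ((e.1 == sV k) && uV e.2) || ((e.2 == tV k) && uV e.1)) ->
  (sV k, i) \in T -> uV i.
Proof. by move=> H /H /=; rewrite ?eqxx uVs ?andbF ?orbF. Qed.

Lemma form_t k (T : {set 'I_k.+3 * 'I_k.+3}) i :
  (forall e, e \in T -> ((e.1 == sV k) && uV e.2) || ((e.2 == tV k) && uV e.1)) ->
  (i, tV k) \in T -> uV i.
Proof. by move=> H /H /=; rewrite ?eqxx uVt ?andbF. Qed.

Lemma T0_conn k : connected_graph (tree_rel (T0 k)).
Proof.
apply: conn_all (@tree_rel_sym _ _) _ => v.
have Hst : connect (tree_rel (T0 k)) (sV k) (tV k).
  apply: connect_trans (connect1 (_ : tree_rel (T0 k) (sV k) (ul k))) (connect1 _).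
    by rewrite /tree_rel T0_s uV_ul.
  by rewrite /tree_rel T0_t eqxx.
case/orP: (cover v) => [/orP [] /eqP -> //| Hu].
apply: connect_trans (connect1 (_ : tree_rel (T0 k) v (sV k))) Hst.
by rewrite /tree_rel T0_s Hu orbT.
Qed.

Lemma S0_conn k : connected_graph (tree_rel (S0 k)).
Proof.
apply: conn_all (@tree_rel_sym _ _) _ => v.
have Hu' : forall u, uV u -> connect (tree_rel (S0 k)) u (tV k).
  by move=> u Hu; apply: connect1; rewrite /tree_rel S0_t Hu.
case/orP: (cover v) => [/orP [] /eqP -> //| Hu]; last exact: Hu'.
apply: connect_trans (connect1 (_ : tree_rel (S0 k) (sV k) (u1 k))) (Hu' _ (uV_u1 k)).
by rewrite /tree_rel S0_s eqxx.
Qed.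

Lemma le_nt k (j : 'I_k.+3) : j != tV k -> (j <= k.+1)%N.
Proof.
move=> H; have := ltn_ord j; rewrite ltnS leq_eqVlt => /orP [] // /eqP Hj.
by move: H; rewrite -val_eqE /= Hj eqxx.
Qed.

Lemma sdg_E (R : realFieldType) n (p : 'I_n -> R) E r a b : sdg p E r a b -> E a b.
Proof. by case/and3P. Qed.

Unset Implicit Arguments.

Theorem mainTheorem7 (R : realFieldType) (n : nat) (eta : R) :
  (3 <= n)%N -> 0 < eta ->
  exists (p : 'I_n -> R) (E : rel 'I_n) (r : 'I_n -> R),
    [/\ euclid1_graph p E,
        (forall v, 0 < r v),
        connected_graph (sdg p E r) &
        exists m m' : R,
          [/\ mst_weight p E m,
              mst_weight p (sdg p E r) m' &
              n%:R - 2 - eta <= m' / m]].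
Proof.
case: n => [|[|[|k]]] // _ Heta.
pose N : R := (k.+1)%:R.
pose Q : R := N ^+ 3 / eta.
pose X : R := Q + N + 1.
pose P : R := N + X.
have HQ : 0 <= Q by rewrite /Q divr_ge0 ?exprn_ge0 ?ler0n ?ltW.
have HX : N + 1 <= X by rewrite /X -addrA lerDr.
have HP : (k.+1 + k.+1)%:R < P.
  rewrite natrD /P ltrD2l; apply: lt_le_trans HX; by rewrite ltrDl ltr01.
have HP0 : 0 < P by apply: le_lt_trans HP.
exists (pp P), (@Eg k), (rr P); split.
- split; last by split; [exact: Eg_sym | exact: Eg_irr].
  have Hlt : forall j : 'I_k.+3, j != tV k -> (j : nat)%:R < P.
    move=> j /le_nt Hj; apply: le_lt_trans HP; rewrite ler_nat.
    by apply: leq_trans Hj (leq_addl _ _).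
  move=> i j; rewrite /pp; case: ifP => Hi; case: ifP => Hj.
  + by move/eqP: Hi => ->; move/eqP: Hj => ->.
  + by move=> HPj; have := Hlt j (negbT Hj); rewrite -HPj ltxx.
  + by move=> HPj; have := Hlt i (negbT Hi); rewrite HPj ltxx.
  + by move/eqP; rewrite eqr_nat => /eqP; apply: val_inj.
- by move=> v; rewrite /rr; case: ifP => _ //; exact: ltr01.
- apply: conn_all (@sdg_sym _ _ _) _ => v.
  case/orP: (cover v) => [/orP [] /eqP -> //| Hu].
    exact: connect_trans (connect1 (sdg_su1 HP)) (connect1 (sdg_ut HP (uV_u1 k))).
  exact: connect1 (sdg_ut HP Hu).
have F0 := form_of (fun a b (H : Eg a b) => H) (@T0_edge k).
exists (tree_weight (pp P) (T0 k)), (tree_weight (pp P) (S0 k)); split.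
- split.
    exists (T0 k); split => //; split; [exact: T0_edge | split; [exact: T0_conn | exact: T0_card]].
  move=> T [HT [_ HTc]].
  have hf := form_of (fun a b (H : Eg a b) => H) HT.
  rewrite /tree_weight (decomp _ hf) (decomp _ F0).
  apply: (@shift_le _ _ _ _ (fun i => (if (sV k, i) \in T then 1 else 0) + (if (i, tV k) \in T then 1 else 0)) (fun i => (if (sV k, i) \in T0 k then 1 else 0) + (if (i, tV k) \in T0 k then 1 else 0)) (P - N)).
    by rewrite !count_T // HTc T0_card.
  move=> i; rewrite !vw T0_s T0_t.
  case Hu: (uV i); last first.
    have -> : ((sV k, i) \in T) = false by apply/negP => /(form_s hf); rewrite Hu.
    have -> : ((i, tV k) \in T) = false by apply/negP => /(form_t hf); rewrite Hu.
    have -> : (i == ul k) = false by apply/negP => /eqP Hi; move: Hu; rewrite Hi uV_ul.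
    by [].
  have := uV_val i; rewrite Hu => /esym /andP [_ HiN].
  have HiN' : (i : nat)%:R <= N by rewrite ler_nat.
  rewrite /=; apply: per_m => //.
  + rewrite ewt_s // pp_u // lerBrDr -natrD; apply: ltW; apply: le_lt_trans HP.
    by rewrite ler_nat leq_add2r.
  + by rewrite ewt_t // pp_u // lerB.
  + by move/eqP => ->; rewrite ewt_t // pp_u ?uV_ul // ul_val.
- split.
    exists (S0 k); split => //; split; [by move=> e; exact: S0_edge | split; [exact: S0_conn | exact: S0_card]].
  move=> T [HT [_ HTc]].
  have hf := form_of (@sdg_E _ _ _ _ _) HT.
  rewrite /tree_weight (decomp _ hf) (decomp _ (@S0_form k)).
  apply: (@shift_le _ _ _ _ (fun i => (if (sV k, i) \in T then 1 else 0) + (if (i, tV k) \in T then 1 else 0)) (fun i => (if (sV k, i) \in S0 k then 1 else 0) + (if (i, tV k) \in S0 k then 1 else 0)) P).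
    by rewrite !count_T // ?HTc ?S0_card //; exact: S0_form.
  move=> i; rewrite !vw S0_s S0_t.
  have Hb := pp_bnd i HP; case/andP: Hb => Hb0 Hb1.
  apply: per_m'.
  + by rewrite ewt_s.
  + by rewrite ewt_t // gerBl.
  + move=> Hs; have Hu := form_s hf Hs.
    have /andP [_ Hsd] := HT _ Hs.
    by rewrite (sdg_s_inv HP (Hsd : sdg _ _ _ (sV k) i) Hu) eqxx.
  + exact: form_t hf.
pose S := \sum_i (if uV i then ewt (pp P) (sV k) i else 0).
have HPN : P - N = X by rewrite /P addrC addKr.
have Hm : tree_weight (pp P) (T0 k) = S + X.
  rewrite /tree_weight (decomp _ F0).
  rewrite (eq_bigr (fun i => (if uV i then ewt (pp P) (sV k) i else 0) + (if i == ul k then ewt (pp P) i (tV k) else 0))); last by move=> i _; rewrite T0_s T0_t.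
  rewrite big_split /=.
  by rewrite -[in X in _ + X = _]big_mkcond big_pred1_eq ewt_t // pp_u ?uV_ul // ul_val -/N HPN.
have HS0 : 0 <= S.
  apply: sumr_ge0 => i _; case: ifP => // _; rewrite ewt_s //.
  by case/andP: (pp_bnd i HP).
have HS1 : S <= N * N.
  rewrite {2}/N mulr_natr -sum_uV; apply: ler_sum => i _; case Hu: (uV i) => //.
  rewrite ewt_s // pp_u // ler_nat.
  by move: Hu; rewrite uV_val => /andP [].
have Hm' : N * X <= tree_weight (pp P) (S0 k).
  rewrite mulrC /N mulr_natr -sum_uV /tree_weight (decomp _ (@S0_form k)).
  apply: ler_sum => i _; rewrite S0_s S0_t.
  apply: le_trans (_ : (if uV i then ewt (pp P) i (tV k) else 0) <= _).
    case Hu: (uV i) => //.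
    rewrite ewt_t // pp_u // -HPN lerB //.
    by rewrite ler_nat; move: Hu; rewrite uV_val => /andP [].
  by rewrite lerDr; case: ifP => _ //; exact: normr_ge0.
have HX0 : 0 < X by apply: lt_le_trans HX; rewrite ltr_pwDr ?ltr01 ?ler0n.
have Hm0 : 0 < S + X by rewrite ltr_wpDl.
rewrite Hm ler_pdivlMr //.
have -> : (k.+3)%:R - 2 = N :> R by rewrite -[k.+3]addn2 natrD addrK.
apply: le_trans Hm'.
case: (lerP (N - eta) 0) => Hs.
  apply: le_trans (mulr_le0_ge0 Hs (ltW Hm0)) _.
  by rewrite mulr_ge0 ?ler0n ?ltW.
apply: le_trans (ler_wpM2l (ltW Hs) (lerD HS1 (lexx X))) _.
have HeX : N ^+ 3 <= eta * X.
  have -> : N ^+ 3 = eta * Q by rewrite /Q mulrC divfK // gt_eqF.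
  by rewrite ler_pM2l //; rewrite /X -addrA lerDl addr_ge0 ?ler0n.
rewrite mulrBl.
apply: le_trans (lerB (lexx (N * (N * N + X))) (_ : eta * X <= eta * (N * N + X))) _.
  by rewrite ler_pM2l //; rewrite lerDr mulr_ge0 ?ler0n.
apply: le_trans (lerB (lexx (N * (N * N + X))) HeX) _.
by rewrite mulrDr exprS expr2 addrC addKr.
Qed.
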